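(* Let $n\ge 4$ and let $f^{(n)}$ be a symmetric form of degree $4$ in $n$ variables. If $f^{(n)}$ is a sum of squares, then it can be written as $$f^{(n)}=\alpha_{11}p_{(1^4)}+2\alpha_{12}p_{(2,1^2)}+\alpha_{22}p_{(2^2)}+\beta_{11}\left(p_{(2,1^2)}-p_{(1^4)}\right)+2\beta_{12}\left(p_{(3,1)}-p_{(2,1^2)}\right)+\beta_{22}\left(p_{(4)}-p_{(2^2)}\right)$$ $$+\gamma\left(\tfrac12 p_{(1^4)}-p_{(2,1^2)}+\tfrac{n^2-3n+3}{2n^2}p_{(2^2)}+\tfrac{2n-2}{n^2}p_{(3,1)}+\tfrac{1-n}{2n^2}p_{(4)}\right)$$ with $\gamma\ge 0$ and the matrices $\begin{pmatrix}\alpha_{11}&\alpha_{12}\\ \alpha_{12}&\alpha_{22}\end{pmatrix}$ and $\begin{pmatrix}\beta_{11}&\beta_{12}\\ \beta_{12}&\beta_{22}\end{pmatrix}$ positive semidefinite.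
   Context: $p_i=\frac1n(x_1^i+\dots+x_n^i)$ and $p_\lambda=\prod_i p_{\lambda_i}$ for a partition $\lambda$; e.g. $p_{(2,1^2)}=p_2p_1^2$, $p_{(1^4)}=p_1^4$, $p_{(2^2)}=p_2^2$, $p_{(3,1)}=p_3p_1$, $p_{(4)}=p_4$. *)

(* Defs.v *)
From HB Require Import structures.
From mathcomp Require Import all_boot all_order all_algebra.
From mathcomp Require Import reals.
From mathcomp Require Import mpoly.
Set Implicit Arguments. Unset Strict Implicit. Unset Printing Implicit Defensive.
Import Order.TTheory GRing.Theory Num.Theory.
Local Open Scope ring_scope.

Definition psum (R : realType) (n : nat) (i : nat) : {mpoly R[n]} :=
  (n%:R)^-1 *: \sum_(j < n) 'X_j ^+ i.

Definition is_sos (R : realType) (n : nat) (f : {mpoly R[n]}) : Prop :=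
  exists s : seq {mpoly R[n]}, f = \sum_(q <- s) q ^+ 2.

Definition psd (R : realType) (m : nat) (A : 'M[R]_m) : Prop :=
  A^T = A /\ forall v : 'cV[R]_m, 0 <= (v^T *m A *m v) ord0 ord0.

Definition sym2 (R : realType) (a b c : R) : 'M[R]_2 :=
  \matrix_(i < 2, j < 2)
    (if (val i == 0%N) && (val j == 0%N) then a
     else if (val i == 1%N) && (val j == 1%N) then c else b).

(* Main.v *)
Require Import Defs.
From HB Require Import structures.
From mathcomp Require Import all_boot all_order all_algebra.
From mathcomp Require Import reals.
From mathcomp Require Import mpoly.
From mathcomp Require Import fingroup perm.
From mathcomp Require Import ring lra.
Import Order.TTheory GRing.Theory Num.Theory.
Local Open Scope ring_scope.
Set Implicit Arguments. Unset Strict Implicit. Unset Printing Implicit Defensive.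

Section Avg.
Variable (R : realType) (n : nat).
Local Notation MP := {mpoly R[n]}.

Definition Aop (g : MP) : MP := (n`!%:R)^-1 *: \sum_(s : 'S_n) msym s g.

Lemma fact_neq0 : (n`!%:R : R) != 0.
Proof. by rewrite pnatr_eq0 -lt0n fact_gt0. Qed.

Lemma Aop_is_linear : linear Aop.
Proof.
move=> c g h; rewrite /Aop scalerA mulrC -scalerA -scalerDr; congr (_ *: _).
rewrite scaler_sumr -big_split /=; apply: eq_bigr => s _.
by rewrite msymD msymZ.
Qed.

HB.instance Definition _ :=
  GRing.isLinear.Build R MP MP _ Aop Aop_is_linear.

Lemma Aop_sym g : g \is symmetric -> Aop g = g.
Proof.
move=> /issymP hg; rewrite /Aop (eq_bigr (fun _ => g)) ?sumr_const ?card_Sn.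
  by rewrite -scaler_nat scalerA mulVf ?scale1r // fact_neq0.
by move=> s _; rewrite hg.
Qed.

Lemma Aop_msym t g : Aop (msym t g) = Aop g.
Proof.
rewrite /Aop; congr (_ *: _).
rewrite [RHS](reindex_inj (mulgI t)) /=; apply: eq_bigr => s _.
by rewrite msymMm.
Qed.

Lemma Aop_mulsym a g : a \is symmetric -> Aop (a * g) = a * Aop g.
Proof.
move=> /issymP ha; rewrite /Aop -scalerAr mulr_sumr; congr (_ *: _).
by apply: eq_bigr => s _; rewrite msymM ha.
Qed.

Lemma msymXi (s : 'S_n) i : msym s ('X_i : MP) = 'X_(s i).
Proof.
rewrite msymX; congr 'X_[_]; apply/mnmP => j; rewrite !mnmE.
by rewrite -(inj_eq (@perm_inj _ s)) permKV eq_sym.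
Qed.

End Avg.
Section Vals.
Variable (R : realType) (n : nat).
Local Notation MP := {mpoly R[n]}.
Local Notation A := (@Aop R n).

Definition mono (a : seq 'I_n) (e : seq nat) : MP :=
  \prod_(p <- zip a e) 'X_(p.1) ^+ p.2.

Lemma msym_mono (s : 'S_n) a e : msym s (mono a e) = mono (map s a) e.
Proof.
elim: a e => [|x a IH] [|k e]; try by rewrite /mono /= big_nil rmorph1.
have mc : forall y b f, mono (y :: b) (k :: f) = 'X_y ^+ k * mono b f.
  by move=> y b f; rewrite /mono /= big_cons.
by rewrite !mc rmorphM rmorphXn /= msymXi IH.
Qed.

Lemma exists_perm_seq (a b : seq 'I_n) :
  uniq a -> uniq b -> size a = size b -> exists s : 'S_n, map s a = b.
Proof.
elim: a b => [|x a IH] [|y b] //=.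
  by move=> _ _ _; exists 1%g.
move=> /andP[xa ua] /andP[yb ub] [sz].
have [s hs] := IH b ua ub sz.
exists (s * tperm (s x) y)%g; rewrite permM tpermL; congr (_ :: _).
rewrite -hs; apply/eq_in_map => z za /=; rewrite permM tpermD //.
  by rewrite (inj_eq perm_inj); apply: contraNneq xa => ->.
by apply: contraNneq yb => ->; rewrite -hs map_f.
Qed.

Lemma A_mono a b e : uniq a -> uniq b -> size a = size b ->
  A (mono a e) = A (mono b e).
Proof.
move=> ua ub sz; have [s <-] := exists_perm_seq ua ub sz.
by rewrite -msym_mono Aop_msym.
Qed.

Lemma mono1 i k : mono [:: i] [:: k] = 'X_i ^+ k.
Proof. by rewrite /mono /= big_cons big_nil mulr1. Qed.
Lemma mono2 i j k l : mono [:: i; j] [:: k; l] = 'X_i ^+ k * 'X_j ^+ l.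
Proof. by rewrite /mono /= !big_cons big_nil mulr1. Qed.
Lemma mono3 i j h k l m :
  mono [:: i; j; h] [:: k; l; m] = 'X_i ^+ k * 'X_j ^+ l * 'X_h ^+ m.
Proof. by rewrite /mono /= !big_cons big_nil mulr1 !mulrA. Qed.
Lemma mono4 i j h g k l m p :
  mono [:: i; j; h; g] [:: k; l; m; p] =
  'X_i ^+ k * 'X_j ^+ l * 'X_h ^+ m * 'X_g ^+ p.
Proof. by rewrite /mono /= !big_cons big_nil mulr1 !mulrA. Qed.

Lemma A_V1 i j k : A ('X_i ^+ k) = A ('X_j ^+ k).
Proof. by rewrite -!mono1; apply: A_mono. Qed.

Lemma A_V2 i j i' j' k l : i != j -> i' != j' ->
  A ('X_i ^+ k * 'X_j ^+ l) = A ('X_i' ^+ k * 'X_j' ^+ l).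
Proof.
by move=> h1 h2; rewrite -!mono2; apply: A_mono; rewrite //= inE ?h1 ?h2.
Qed.

Lemma A_V3 i j h i' j' h' k l m :
  uniq [:: i; j; h] -> uniq [:: i'; j'; h'] ->
  A ('X_i ^+ k * 'X_j ^+ l * 'X_h ^+ m) = A ('X_i' ^+ k * 'X_j' ^+ l * 'X_h' ^+ m).
Proof. by move=> h1 h2; rewrite -!mono3; apply: A_mono. Qed.

Lemma A_V4 i j h g i' j' h' g' k l m p :
  uniq [:: i; j; h; g] -> uniq [:: i'; j'; h'; g'] ->
  A ('X_i ^+ k * 'X_j ^+ l * 'X_h ^+ m * 'X_g ^+ p) =
  A ('X_i' ^+ k * 'X_j' ^+ l * 'X_h' ^+ m * 'X_g' ^+ p).
Proof. by move=> h1 h2; rewrite -!mono4; apply: A_mono. Qed.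

End Vals.
Section Rel.
Variable (R : realType) (n : nat) (hn : (3 < n)%N).
Local Notation MP := {mpoly R[n]}.
Local Notation A := (@Aop R n).
Local Notation p := (@psum R n).

Definition o0 : 'I_n := Ordinal (leq_ltn_trans (isT : (0 <= 3)%N) hn).
Definition o1 : 'I_n := Ordinal (leq_ltn_trans (isT : (1 <= 3)%N) hn).
Definition o2 : 'I_n := Ordinal (leq_ltn_trans (isT : (2 <= 3)%N) hn).
Definition o3 : 'I_n := Ordinal hn.

Definition M31 := A ('X_o0 ^+ 3 * 'X_o1 ^+ 1).
Definition M22 := A ('X_o0 ^+ 2 * 'X_o1 ^+ 2).
Definition M21 := A ('X_o0 ^+ 2 * 'X_o1 ^+ 1).
Definition M11 := A ('X_o0 ^+ 1 * 'X_o1 ^+ 1).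
Definition M211 := A ('X_o0 ^+ 2 * 'X_o1 ^+ 1 * 'X_o2 ^+ 1).
Definition M111 := A ('X_o0 ^+ 1 * 'X_o1 ^+ 1 * 'X_o2 ^+ 1).
Definition M1111 := A ('X_o0 ^+ 1 * 'X_o1 ^+ 1 * 'X_o2 ^+ 1 * 'X_o3 ^+ 1).

Lemma n_neq0 : (n%:R : R) != 0.
Proof. by rewrite pnatr_eq0 -lt0n (ltn_trans _ hn). Qed.

Lemma psum_sym k : p k \is symmetric.
Proof.
apply/issymP => s; rewrite /psum msymZ; congr (_ *: _).
rewrite raddf_sum /= [RHS](reindex_inj (@perm_inj _ s)) /=.
by apply: eq_bigr => j _; rewrite rmorphXn /= msymXi.
Qed.

Lemma sum_ind (a : 'I_n) (v : MP) : \sum_(j < n) (if j == a then v else 0) = v.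
Proof. by rewrite -big_mkcond /= big_pred1_eq. Qed.

Lemma A_Xk i k : A ('X_i ^+ k) = p k.
Proof.
rewrite -[RHS](Aop_sym (psum_sym k)) /psum linearZ linear_sum /=.
rewrite (eq_bigr (fun _ => A ('X_i ^+ k))); last by move=> j _; apply: A_V1.
by rewrite sumr_const card_ord -scaler_nat scalerA mulVf ?scale1r // n_neq0.
Qed.

Lemma rel_p1 g : p 1 * A g = (n%:R)^-1 *: \sum_(j < n) A ('X_j * g).
Proof.
rewrite -Aop_mulsym ?psum_sym // /psum -scalerAl mulr_suml linearZ linear_sum /=.
by congr (_ *: _); apply: eq_bigr => j _; rewrite expr1.
Qed.

Lemma rel_p2 g : p 2 * A g = (n%:R)^-1 *: \sum_(j < n) A ('X_j ^+ 2 * g).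
Proof.
by rewrite -Aop_mulsym ?psum_sym // /psum -scalerAl mulr_suml linearZ linear_sum.
Qed.

Lemma sum_ite1 (a : 'I_n) (D V : MP) :
  \sum_(j < n) (D + (if j == a then V else 0)) = D *+ n + V.
Proof. by rewrite big_split /= sumr_const card_ord sum_ind. Qed.

Lemma sum_ite2 (a b : 'I_n) (D V W : MP) :
  \sum_(j < n) (D + (if j == a then V else 0) + (if j == b then W else 0))
   = D *+ n + V + W.
Proof. by rewrite !big_split /= sumr_const card_ord !sum_ind. Qed.

Lemma sum_ite3 (a b c : 'I_n) (D V W U : MP) :
  \sum_(j < n) (D + (if j == a then V else 0) + (if j == b then W else 0)
     + (if j == c then U else 0))
   = D *+ n + V + W + U.
Proof. by rewrite !big_split /= sumr_const card_ord !sum_ind. Qed.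

Lemma rel31 : p 1 * p 3 = (n%:R)^-1 *: (M31 *+ n + (p 4 - M31)).
Proof.
rewrite -(A_Xk o0 3) rel_p1 -(sum_ite1 o0); congr (_ *: _); apply: eq_bigr => j _.
case: (eqVneq j o0) => [->|ne].
  by rewrite -exprS A_Xk addrC subrK.
rewrite addr0 /M31 mulrC -(expr1 'X_j); apply: A_V2 => //.
by rewrite eq_sym.
Qed.


Lemma o01 : (o0 == o1) = false. Proof. by []. Qed.
Lemma o02 : (o0 == o2) = false. Proof. by []. Qed.
Lemma o12 : (o1 == o2) = false. Proof. by []. Qed.
Lemma o10 : (o1 == o0) = false. Proof. by []. Qed.
Lemma o20 : (o2 == o0) = false. Proof. by []. Qed.
Lemma o21 : (o2 == o1) = false. Proof. by []. Qed.

Lemma uniq3 j : j != o0 -> j != o1 -> uniq [:: o0; o1; j].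
Proof.
move=> h0 h1; rewrite /= !inE negb_or o01 /= andbT.
by rewrite ![j == _]eq_sym in h0 h1; rewrite h0 h1.
Qed.

Lemma uniq4 j : j != o0 -> j != o1 -> j != o2 -> uniq [:: o0; o1; o2; j].
Proof.
move=> h0 h1 h2; rewrite /= !inE !negb_or o01 o02 o12 /= !andbT.
by rewrite ![j == _]eq_sym in h0 h1 h2; rewrite h0 h1 h2.
Qed.

Lemma rel22 : p 2 * p 2 = (n%:R)^-1 *: (M22 *+ n + (p 4 - M22)).
Proof.
rewrite -[X in _ * X](A_Xk o0 2) rel_p2 -(sum_ite1 o0); congr (_ *: _).
apply: eq_bigr => j _; case: (eqVneq j o0) => [->|ne].
  by rewrite -exprD A_Xk addrC subrK.
rewrite addr0 /M22 mulrC; apply: A_V2 => //; by rewrite eq_sym.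
Qed.

Lemma rel21 : p 1 * p 2 = (n%:R)^-1 *: (M21 *+ n + (p 3 - M21)).
Proof.
rewrite -[X in _ * X](A_Xk o0 2) rel_p1 -(sum_ite1 o0); congr (_ *: _).
apply: eq_bigr => j _; case: (eqVneq j o0) => [->|ne].
  by rewrite -exprS A_Xk addrC subrK.
rewrite addr0 /M21 mulrC -(expr1 'X_j); apply: A_V2 => //; by rewrite eq_sym.
Qed.

Lemma rel11 : p 1 * p 1 = (n%:R)^-1 *: (M11 *+ n + (p 2 - M11)).
Proof.
rewrite -[X in _ * X](A_Xk o0 1) rel_p1 -(sum_ite1 o0); congr (_ *: _).
apply: eq_bigr => j _; case: (eqVneq j o0) => [->|ne].
  by rewrite -exprS A_Xk addrC subrK.
rewrite addr0 /M11 mulrC -(expr1 'X_j); apply: A_V2 => //; by rewrite eq_sym.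
Qed.

Lemma rel211 : p 1 * M21 =
  (n%:R)^-1 *: (M211 *+ n + (M31 - M211) + (M22 - M211)).
Proof.
rewrite {1}/M21 rel_p1 -(sum_ite2 o0 o1); congr (_ *: _).
apply: eq_bigr => j _; case: (eqVneq j o0) => [->|ne0].
  rewrite ?eqxx ?o01 ?addr0 addrC subrK /M31.
  by f_equal; ring.
case: (eqVneq j o1) => [->|ne1].
  rewrite ?eqxx ?o10 ?add0r ?addr0 addrC subrK /M22.
  by f_equal; ring.
rewrite ?addr0 /M211.
rewrite (_ : 'X_j * _ = 'X_o0 ^+ 2 * 'X_o1 ^+ 1 * 'X_j ^+ 1); last by ring.
by apply: A_V3 => //; apply: uniq3.
Qed.

Lemma rel111 : p 1 * M11 =
  (n%:R)^-1 *: (M111 *+ n + (M21 - M111) + (M21 - M111)).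
Proof.
rewrite {1}/M11 rel_p1 -(sum_ite2 o0 o1); congr (_ *: _).
apply: eq_bigr => j _; case: (eqVneq j o0) => [->|ne0].
  rewrite ?eqxx ?o01 ?addr0 addrC subrK /M21.
  by f_equal; ring.
case: (eqVneq j o1) => [->|ne1].
  rewrite ?eqxx ?o10 ?add0r ?addr0 addrC subrK /M21.
  rewrite (_ : 'X_o1 * _ = 'X_o1 ^+ 2 * 'X_o0 ^+ 1); last by ring.
  by apply: A_V2.
rewrite ?addr0 /M111.
rewrite (_ : 'X_j * _ = 'X_o0 ^+ 1 * 'X_o1 ^+ 1 * 'X_j ^+ 1); last by ring.
by apply: A_V3 => //; apply: uniq3.
Qed.

Lemma rel1111 : p 1 * M111 =
  (n%:R)^-1 *: (M1111 *+ n + (M211 - M1111) + (M211 - M1111) + (M211 - M1111)).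
Proof.
rewrite {1}/M111 rel_p1 -(sum_ite3 o0 o1 o2); congr (_ *: _).
apply: eq_bigr => j _; case: (eqVneq j o0) => [->|ne0].
  rewrite ?eqxx ?o01 ?o02 ?addr0 addrC subrK /M211.
  by f_equal; ring.
case: (eqVneq j o1) => [->|ne1].
  rewrite ?eqxx ?o10 ?o12 ?add0r ?addr0 addrC subrK /M211.
  rewrite (_ : 'X_o1 * _ = 'X_o1 ^+ 2 * 'X_o0 ^+ 1 * 'X_o2 ^+ 1); last by ring.
  by apply: A_V3.
case: (eqVneq j o2) => [->|ne2].
  rewrite ?eqxx ?o20 ?o21 !addr0 addrC subrK /M211.
  rewrite (_ : 'X_o2 * _ = 'X_o2 ^+ 2 * 'X_o0 ^+ 1 * 'X_o1 ^+ 1); last by ring.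
  by apply: A_V3.
rewrite ?addr0 /M1111.
rewrite (_ : 'X_j * _ = 'X_o0 ^+ 1 * 'X_o1 ^+ 1 * 'X_o2 ^+ 1 * 'X_j ^+ 1); last by ring.
by apply: A_V4 => //; apply: uniq4.
Qed.

End Rel.
Section LC.
Variable (R : realType) (n : nat) (hn : (3 < n)%N).
Local Notation MP := {mpoly R[n]}.
Local Notation p := (@psum R n).
Local Notation N := (n%:R : R).

Lemma N_neq0 : N != 0. Proof. exact: (@n_neq0 R n hn). Qed.

Lemma Nk_neq0 k : (k <= 3)%N -> N - k%:R != 0.
Proof.
move=> hk; rewrite -natrB ?pnatr_eq0 ?subn_eq0 -?ltnNge ?(leq_ltn_trans hk) //.
exact: ltnW (leq_ltn_trans hk hn).
Qed.

Lemma solve1 (X Y Z : MP) : Y = N^-1 *: (X *+ n + (Z - X)) ->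
  X = (N - 1)^-1 *: (N *: Y - Z).
Proof.
move=> ->; rewrite scalerA (mulfV N_neq0) scale1r.
have -> : X *+ n + (Z - X) - Z = (N - 1) *: X.
  by rewrite -!mul_mpolyC rmorphB /= rmorph_nat; ring.
by rewrite scalerA mulVf ?scale1r // (Nk_neq0 (isT : (1 <= 3)%N)).
Qed.

Lemma solve2 (X Y Z1 Z2 : MP) : Y = N^-1 *: (X *+ n + (Z1 - X) + (Z2 - X)) ->
  X = (N - 2%:R)^-1 *: (N *: Y - (Z1 + Z2)).
Proof.
move=> ->; rewrite scalerA (mulfV N_neq0) scale1r.
have -> : X *+ n + (Z1 - X) + (Z2 - X) - (Z1 + Z2) = (N - 2%:R) *: X.
  by rewrite -!mul_mpolyC rmorphB /= !rmorph_nat; ring.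
by rewrite scalerA mulVf ?scale1r // (Nk_neq0 (isT : (2 <= 3)%N)).
Qed.

Lemma solve3 (X Y Z1 Z2 Z3 : MP) :
  Y = N^-1 *: (X *+ n + (Z1 - X) + (Z2 - X) + (Z3 - X)) ->
  X = (N - 3%:R)^-1 *: (N *: Y - (Z1 + Z2 + Z3)).
Proof.
move=> ->; rewrite scalerA (mulfV N_neq0) scale1r.
have -> : X *+ n + (Z1 - X) + (Z2 - X) + (Z3 - X) - (Z1 + Z2 + Z3) = (N - 3%:R) *: X.
  by rewrite -!mul_mpolyC rmorphB /= !rmorph_nat; ring.
by rewrite scalerA mulVf ?scale1r // (Nk_neq0 (isT : (3 <= 3)%N)).
Qed.

Definition lc2 (a b : R) : MP := a *: p 1 ^+ 2 + b *: p 2.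
Definition lc3 (a b c : R) : MP := a *: p 1 ^+ 3 + b *: (p 2 * p 1) + c *: p 3.
Definition lc (a b c d e : R) : MP :=
  a *: p 1 ^+ 4 + b *: (p 2 * p 1 ^+ 2) + c *: p 2 ^+ 2 + d *: (p 3 * p 1) + e *: p 4.

Ltac tor := rewrite /lc /lc2 /lc3 -!mul_mpolyC ?rmorphD ?rmorphB ?rmorphN ?rmorphM ?rmorph1 ?rmorph0 /=.

Lemma lc2_sub a b a' b' : lc2 a b - lc2 a' b' = lc2 (a - a') (b - b').
Proof. by tor; ring. Qed.
Lemma lc2_scale c a b : c *: lc2 a b = lc2 (c * a) (c * b).
Proof. by tor; ring. Qed.
Lemma lc3_add a b c a' b' c' : lc3 a b c + lc3 a' b' c' = lc3 (a + a') (b + b') (c + c').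
Proof. by tor; ring. Qed.
Lemma lc3_sub a b c a' b' c' : lc3 a b c - lc3 a' b' c' = lc3 (a - a') (b - b') (c - c').
Proof. by tor; ring. Qed.
Lemma lc3_scale k a b c : k *: lc3 a b c = lc3 (k * a) (k * b) (k * c).
Proof. by tor; ring. Qed.
Lemma lc_add a b c d e a' b' c' d' e' :
  lc a b c d e + lc a' b' c' d' e' = lc (a + a') (b + b') (c + c') (d + d') (e + e').
Proof. by tor; ring. Qed.
Lemma lc_sub a b c d e a' b' c' d' e' :
  lc a b c d e - lc a' b' c' d' e' = lc (a - a') (b - b') (c - c') (d - d') (e - e').
Proof. by tor; ring. Qed.
Lemma lc_scale k a b c d e : k *: lc a b c d e = lc (k * a) (k * b) (k * c) (k * d) (k * e).
Proof. by tor; ring. Qed.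
Lemma mul_p1_lc2 a b : p 1 * lc2 a b = lc3 a b 0.
Proof. by tor; ring. Qed.
Lemma mul_p1_lc3 a b c : p 1 * lc3 a b c = lc a b 0 c 0.
Proof. by tor; ring. Qed.

Lemma lc2_eq a b a' b' : a = a' -> b = b' -> lc2 a b = lc2 a' b'.
Proof. by move=> -> ->. Qed.
Lemma lc3_eq a b c a' b' c' : a = a' -> b = b' -> c = c' -> lc3 a b c = lc3 a' b' c'.
Proof. by move=> -> -> ->. Qed.
Lemma lc_eq a b c d e a' b' c' d' e' : a = a' -> b = b' -> c = c' -> d = d' -> e = e' ->
  lc a b c d e = lc a' b' c' d' e'.
Proof. by move=> -> -> -> -> ->. Qed.

Lemma p11E : p 1 * p 1 = lc2 1 0. Proof. by tor; ring. Qed.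
Lemma p2E : p 2 = lc2 0 1. Proof. by tor; ring. Qed.
Lemma p12E : p 1 * p 2 = lc3 0 1 0. Proof. by tor; ring. Qed.
Lemma p3E : p 3 = lc3 0 0 1. Proof. by tor; ring. Qed.
Lemma p13E : p 1 * p 3 = lc 0 0 0 1 0. Proof. by tor; ring. Qed.
Lemma p22E : p 2 * p 2 = lc 0 0 1 0 0. Proof. by tor; ring. Qed.
Lemma p4E : p 4 = lc 0 0 0 0 1. Proof. by tor; ring. Qed.

End LC.
Section MExp.
Variable (R : realType) (n : nat) (hn : (3 < n)%N).
Local Notation MP := {mpoly R[n]}.
Local Notation p := (@psum R n).
Local Notation N := (n%:R : R).
Local Notation lc := (@lc R n).
Local Notation lc2 := (@lc2 R n).
Local Notation lc3 := (@lc3 R n).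
Local Notation M11 := (@M11 R n hn).
Local Notation M21 := (@M21 R n hn).
Local Notation M31 := (@M31 R n hn).
Local Notation M22 := (@M22 R n hn).
Local Notation M211 := (@M211 R n hn).
Local Notation M111 := (@M111 R n hn).
Local Notation M1111 := (@M1111 R n hn).
Local Notation solve1 := (@solve1 R n hn).
Local Notation solve2 := (@solve2 R n hn).
Local Notation solve3 := (@solve3 R n hn).

Lemma N1 : N - 1 != 0. Proof. by move: (@Nk_neq0 R n hn 1 isT). Qed.
Lemma N2 : N - 2%:R != 0. Proof. exact: (@Nk_neq0 R n hn 2 isT). Qed.
Lemma N3 : N - 3%:R != 0. Proof. exact: (@Nk_neq0 R n hn 3 isT). Qed.
Lemma N0 : N != 0. Proof. exact: (@N_neq0 R n hn). Qed.

Lemma M11E : M11 = lc2 (N / (N - 1)) (- (N - 1)^-1).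
Proof.
rewrite (solve1 (@rel11 R n hn)) p11E p2E lc2_scale lc2_sub lc2_scale.
by apply: lc2_eq; field; rewrite ?N1 ?N2 ?N3.
Qed.


Lemma M21E : M21 = lc3 0 (N / (N - 1)) (- (N - 1)^-1).
Proof.
rewrite (solve1 (@rel21 R n hn)) p12E p3E lc3_scale lc3_sub lc3_scale.
by apply: lc3_eq; field; rewrite ?N1 ?N2 ?N3.
Qed.

Lemma M31E : M31 = lc 0 0 0 (N / (N - 1)) (- (N - 1)^-1).
Proof.
rewrite (solve1 (@rel31 R n hn)) p13E p4E lc_scale lc_sub lc_scale.
by apply: lc_eq; field; rewrite ?N1 ?N2 ?N3.
Qed.

Lemma M22E : M22 = lc 0 0 (N / (N - 1)) 0 (- (N - 1)^-1).
Proof.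
rewrite (solve1 (@rel22 R n hn)) p22E p4E lc_scale lc_sub lc_scale.
by apply: lc_eq; field; rewrite ?N1 ?N2 ?N3.
Qed.

Definition D2 := (N - 1) * (N - 2%:R).
Definition D3 := (N - 1) * (N - 2%:R) * (N - 3%:R).

Lemma M211E : M211 = lc 0 (N ^+ 2 / D2) (- N / D2) (- 2%:R * N / D2) (2%:R / D2).
Proof.
rewrite (solve2 (@rel211 R n hn)) M21E M31E M22E mul_p1_lc3 lc_add lc_scale lc_sub lc_scale.
by rewrite /D2; apply: lc_eq; field; rewrite ?N1 ?N2 ?N3.
Qed.

Lemma M111E : M111 = lc3 (N ^+ 2 / D2) (- 3%:R * N / D2) (2%:R / D2).
Proof.
rewrite (solve2 (@rel111 R n hn)) M21E M11E mul_p1_lc2 lc3_add lc3_scale lc3_sub lc3_scale.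
by rewrite /D2; apply: lc3_eq; field; rewrite ?N1 ?N2 ?N3.
Qed.

Lemma M1111E : M1111 =
  lc (N ^+ 3 / D3) (- 6%:R * N ^+ 2 / D3) (3%:R * N / D3) (8%:R * N / D3) (- 6%:R / D3).
Proof.
rewrite (solve3 (@rel1111 R n hn)) M111E M211E mul_p1_lc3 !lc_add lc_scale lc_sub lc_scale.
by rewrite /D3 /D2; apply: lc_eq; field; rewrite ?N1 ?N2 ?N3.
Qed.

End MExp.
Section PVal.
Variable (R : realType) (n : nat) (hn : (3 < n)%N).
Local Notation MP := {mpoly R[n]}.
Local Notation A := (@Aop R n).
Local Notation p := (@psum R n).
Local Notation M31 := (@M31 R n hn).
Local Notation M22 := (@M22 R n hn).
Local Notation M211 := (@M211 R n hn).
Local Notation M1111 := (@M1111 R n hn).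
Local Notation A_Xk := (@A_Xk R n hn).

Definition dl (i j : 'I_n) : R := (i == j)%:R.
Lemma dl_id i : dl i i = 1. Proof. by rewrite /dl eqxx. Qed.
Lemma dl_ne i j : i != j -> dl i j = 0. Proof. by rewrite /dl => /negbTE ->. Qed.
Lemma dl_ne' i j : i != j -> dl j i = 0. Proof. by rewrite /dl eq_sym => /negbTE ->. Qed.

Lemma val22 i j : i != j -> A ('X_i ^+ 2 * 'X_j ^+ 2) = M22.
Proof. by move=> h; apply: A_V2. Qed.
Lemma val31 i j : i != j -> A ('X_i ^+ 3 * 'X_j ^+ 1) = M31.
Proof. by move=> h; apply: A_V2. Qed.
Lemma val211 i j k : uniq [:: i; j; k] ->
  A ('X_i ^+ 2 * 'X_j ^+ 1 * 'X_k ^+ 1) = M211.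
Proof. by move=> h; apply: A_V3. Qed.
Lemma val1111 i j k l : uniq [:: i; j; k; l] ->
  A ('X_i ^+ 1 * 'X_j ^+ 1 * 'X_k ^+ 1 * 'X_l ^+ 1) = M1111.
Proof. by move=> h; apply: A_V4. Qed.

Lemma uq3 (i j k : 'I_n) : i != j -> i != k -> j != k -> uniq [:: i; j; k].
Proof. by move=> a b c; rewrite /= !inE negb_or a b c. Qed.
Lemma uq4 (i j k l : 'I_n) : i != j -> i != k -> i != l -> j != k -> j != l -> k != l ->
  uniq [:: i; j; k; l].
Proof. by move=> a b c d e f; rewrite /= !inE !negb_or a b c d e f. Qed.

Ltac cl := rewrite -!mul_mpolyC ?rmorphD ?rmorphB ?rmorphN ?rmorphM ?rmorph1 ?rmorph0 /=; ring.

Lemma VA i j : A ('X_i ^+ 2 * 'X_j ^+ 2) = M22 + dl i j *: (p 4 - M22).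
Proof.
case: (eqVneq i j) => [<-|h].
  by rewrite -exprD A_Xk dl_id scale1r addrC subrK.
by rewrite val22 // dl_ne // scale0r addr0.
Qed.

Lemma VB i j k : j != k ->
  A ('X_i ^+ 2 * ('X_j * 'X_k)) = M211 + (dl i j + dl i k) *: (M31 - M211).
Proof.
move=> hjk; case: (eqVneq i j) hjk => [<-|hij] hjk.
  rewrite (_ : _ * _ = 'X_i ^+ 3 * 'X_k ^+ 1); last by ring.
  by rewrite val31 // dl_id dl_ne // addr0 scale1r addrC subrK.
case: (eqVneq i k) hjk => [<-|hik] hjk.
  rewrite (_ : _ * _ = 'X_i ^+ 3 * 'X_j ^+ 1); last by ring.
  by rewrite val31 // dl_id dl_ne // add0r scale1r addrC subrK.
rewrite (_ : _ * _ = 'X_i ^+ 2 * 'X_j ^+ 1 * 'X_k ^+ 1); last by ring.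
rewrite val211; last by apply: uq3.
by rewrite !dl_ne // addr0 scale0r addr0.
Qed.

Lemma VC i j k l : i != j -> k != l ->
  A ('X_i * 'X_j * ('X_k * 'X_l)) =
  M1111 + (dl i k + dl i l + dl j k + dl j l) *: (M211 - M1111)
        + (dl i k * dl j l + dl i l * dl j k) *: (M22 - 2%:R *: M211 + M1111).
Proof.
move=> hij hkl; have hji : j != i by rewrite eq_sym.
case: (eqVneq i k) hkl => [<-|hik] hkl.
  case: (eqVneq j l) hkl => [<-|hjl] hkl.
    rewrite (_ : _ * _ = 'X_i ^+ 2 * 'X_j ^+ 2); last by ring.
    rewrite val22 // dl_id (dl_ne hij) (dl_ne' hij) dl_id; cl.
  rewrite (_ : _ * _ = 'X_i ^+ 2 * 'X_j ^+ 1 * 'X_l ^+ 1); last by ring.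
  rewrite val211; last by apply: uq3.
  rewrite dl_id (dl_ne hkl) (dl_ne' hij) (dl_ne hjl); cl.
case: (eqVneq i l) hkl => [<-|hil] hkl.
  case: (eqVneq j k) hkl hik => [<-|hjk] hkl hik.
    rewrite (_ : _ * _ = 'X_i ^+ 2 * 'X_j ^+ 2); last by ring.
    rewrite val22 // dl_id (dl_ne hij) (dl_ne' hij) dl_id; cl.
  rewrite (_ : _ * _ = 'X_i ^+ 2 * 'X_j ^+ 1 * 'X_k ^+ 1); last by ring.
  rewrite val211; last by apply: uq3.
  rewrite dl_id (dl_ne hik) (dl_ne' hij) (dl_ne hjk); cl.
case: (eqVneq j k) hkl hik => [<-|hjk] hkl hik.
  rewrite (_ : _ * _ = 'X_j ^+ 2 * 'X_i ^+ 1 * 'X_l ^+ 1); last by ring.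
  rewrite val211; last by apply: uq3.
  rewrite dl_id (dl_ne hik) (dl_ne hil) (dl_ne hkl); cl.
case: (eqVneq j l) hkl hil => [<-|hjl] hkl hil.
  rewrite (_ : _ * _ = 'X_j ^+ 2 * 'X_i ^+ 1 * 'X_k ^+ 1); last by ring.
  rewrite val211; last by apply: uq3; rewrite // eq_sym.
  rewrite dl_id (dl_ne hik) (dl_ne hil) (dl_ne hjk); cl.
rewrite (_ : _ * _ = 'X_i ^+ 1 * 'X_j ^+ 1 * 'X_k ^+ 1 * 'X_l ^+ 1); last by ring.
rewrite val1111; last by apply: uq4.
rewrite (dl_ne hik) (dl_ne hil) (dl_ne hjk) (dl_ne hjl); cl.
Qed.

End PVal.
Section SumLemmas.
Variable (R : realType) (n : nat).
Local Notation MP := {mpoly R[n]}.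
Local Notation dl := (@dl R n).

Lemma sum_dl (F : 'I_n -> R) i : \sum_(k < n) F k * dl i k = F i.
Proof.
rewrite (bigD1 i) //= dl_id mulr1 big1 ?addr0 // => k hk.
by rewrite dl_ne ?mulr0 // eq_sym.
Qed.

Lemma sum_dl' (F : 'I_n -> R) i : \sum_(k < n) F k * dl k i = F i.
Proof.
rewrite (bigD1 i) //= dl_id mulr1 big1 ?addr0 // => k hk.
by rewrite dl_ne ?mulr0.
Qed.

Lemma sum2_dl1 (G : 'I_n -> 'I_n -> R) i :
  \sum_(k < n) \sum_(l < n) G k l * dl i k = \sum_(l < n) G i l.
Proof.
rewrite -(sum_dl (fun k => \sum_(l < n) G k l) i); apply: eq_bigr => k _.
by rewrite mulr_suml.
Qed.

Lemma sum2_dl2 (G : 'I_n -> 'I_n -> R) i :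
  \sum_(k < n) \sum_(l < n) G k l * dl i l = \sum_(k < n) G k i.
Proof. by apply: eq_bigr => k _; rewrite sum_dl. Qed.

Lemma sum2_dl12 (G : 'I_n -> 'I_n -> R) i j :
  \sum_(k < n) \sum_(l < n) G k l * (dl i k * dl j l) = G i j.
Proof.
rewrite -(sum_dl (fun k => G k j) i); apply: eq_bigr => k _.
rewrite -(sum_dl (fun l => G k l * dl i k) j) /=; apply: eq_bigr => l _.
by rewrite mulrA [_ * dl j l]mulrC mulrA.
Qed.

Lemma sum2D (F G : 'I_n -> 'I_n -> R) :
  \sum_(k < n) \sum_(l < n) (F k l + G k l) =
  \sum_(k < n) \sum_(l < n) F k l + \sum_(k < n) \sum_(l < n) G k l.
Proof. by rewrite -big_split; apply: eq_bigr => k _; rewrite big_split. Qed.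

Lemma sum_sc_base (c a : 'I_n -> R) (X Y : MP) :
  \sum_(i < n) c i *: (X + a i *: Y) =
  (\sum_(i < n) c i) *: X + (\sum_(i < n) c i * a i) *: Y.
Proof.
rewrite !scaler_suml -big_split; apply: eq_bigr => i _.
by rewrite scalerDr scalerA.
Qed.

Lemma sum_sc2 (c a b : 'I_n -> R) (X Y : MP) :
  \sum_(i < n) c i *: (a i *: X + b i *: Y) =
  (\sum_(i < n) c i * a i) *: X + (\sum_(i < n) c i * b i) *: Y.
Proof.
rewrite !scaler_suml -big_split; apply: eq_bigr => i _.
by rewrite scalerDr !scalerA.
Qed.

Lemma sum_sc3 (c a b e : 'I_n -> R) (X Y Z : MP) :
  \sum_(i < n) c i *: (a i *: X + b i *: Y + e i *: Z) =
  (\sum_(i < n) c i * a i) *: X + (\sum_(i < n) c i * b i) *: Y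
    + (\sum_(i < n) c i * e i) *: Z.
Proof.
rewrite !scaler_suml -!big_split; apply: eq_bigr => i _.
by rewrite !scalerDr !scalerA.
Qed.

Lemma sum3 (a b e : 'I_n -> R) (X Y Z : MP) :
  \sum_(i < n) (a i *: X + b i *: Y + e i *: Z) =
  (\sum_(i < n) a i) *: X + (\sum_(i < n) b i) *: Y + (\sum_(i < n) e i) *: Z.
Proof. by rewrite !scaler_suml -!big_split. Qed.

Lemma sum2_sc_base2 (c a b : 'I_n -> 'I_n -> R) (X Y Z : MP) :
  \sum_(k < n) \sum_(l < n) c k l *: (X + a k l *: Y + b k l *: Z) =
  (\sum_(k < n) \sum_(l < n) c k l) *: X
  + (\sum_(k < n) \sum_(l < n) c k l * a k l) *: Y
  + (\sum_(k < n) \sum_(l < n) c k l * b k l) *: Z.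
Proof.
rewrite -sum3; apply: eq_bigr => k _.
rewrite !scaler_suml -!big_split; apply: eq_bigr => l _.
by rewrite !scalerDr !scalerA.
Qed.

Lemma sum2_sc_base1 (c a : 'I_n -> 'I_n -> R) (X Y : MP) :
  \sum_(k < n) \sum_(l < n) c k l *: (X + a k l *: Y) =
  (\sum_(k < n) \sum_(l < n) c k l) *: X
  + (\sum_(k < n) \sum_(l < n) c k l * a k l) *: Y.
Proof.
rewrite !scaler_suml -!big_split; apply: eq_bigr => k _.
rewrite !scaler_suml -!big_split; apply: eq_bigr => l _.
by rewrite !scalerDr !scalerA.
Qed.

Lemma sum2_sc3 (c a b e : 'I_n -> 'I_n -> R) (X Y Z : MP) :
  \sum_(k < n) \sum_(l < n) c k l *: (a k l *: X + b k l *: Y + e k l *: Z) =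
  (\sum_(k < n) \sum_(l < n) c k l * a k l) *: X
  + (\sum_(k < n) \sum_(l < n) c k l * b k l) *: Y
  + (\sum_(k < n) \sum_(l < n) c k l * e k l) *: Z.
Proof.
rewrite -sum3; apply: eq_bigr => k _.
rewrite !scaler_suml -!big_split; apply: eq_bigr => l _.
by rewrite !scalerDr !scalerA.
Qed.

Lemma sum2Z (c : R) (F : 'I_n -> 'I_n -> R) :
  \sum_(k < n) \sum_(l < n) c * F k l = c * \sum_(k < n) \sum_(l < n) F k l.
Proof. by rewrite mulr_sumr; apply: eq_bigr => k _; rewrite mulr_sumr. Qed.

End SumLemmas.
Definition Dp (R : realType) n (d : 'I_n -> R) : {mpoly R[n]} :=
  \sum_(i < n) d i *: 'X_i ^+ 2.
Definition Op (R : realType) n (O : 'I_n -> 'I_n -> R) : {mpoly R[n]} :=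
  \sum_(i < n) \sum_(j < n) O i j *: ('X_i * 'X_j).
Definition rowO (R : realType) n (O : 'I_n -> 'I_n -> R) i : R := \sum_(j < n) O i j.

Section QF.
Variable (R : realType) (n : nat) (hn : (3 < n)%N).
Variable (d : 'I_n -> R) (O : 'I_n -> 'I_n -> R).
Hypothesis hOs : forall i j, O i j = O j i.
Hypothesis hO0 : forall i, O i i = 0.
Local Notation MP := {mpoly R[n]}.
Local Notation A := (@Aop R n).
Local Notation p := (@psum R n).
Local Notation M31 := (@M31 R n hn).
Local Notation M22 := (@M22 R n hn).
Local Notation M211 := (@M211 R n hn).
Local Notation M1111 := (@M1111 R n hn).
Local Notation dl := (@dl R n).
Local Notation r := (rowO O).
Local Notation VA := (@VA R n hn).
Local Notation VB := (@VB R n hn).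
Local Notation VC := (@VC R n hn).

Definition D1 := \sum_(i < n) d i.
Definition J1 := \sum_(i < n) d i ^+ 2.
Definition R1 := \sum_(i < n) r i.
Definition J3 := \sum_(i < n) d i * r i.
Definition J6 := \sum_(i < n) r i ^+ 2.
Definition J5 := \sum_(i < n) \sum_(j < n) O i j ^+ 2.

Lemma rowO_sym i : \sum_(j < n) O j i = r i.
Proof. by apply: eq_bigr => j _; rewrite hOs. Qed.

Lemma AD2 : A (Dp d * Dp d) = (D1 * D1) *: M22 + J1 *: (p 4 - M22).
Proof.
have inner i : A ('X_i ^+ 2 * Dp d) = D1 *: M22 + d i *: (p 4 - M22).
  rewrite /Dp mulr_sumr linear_sum /=.
  under eq_bigr => j _ do rewrite -scalerAr linearZ /= VA.
  by rewrite sum_sc_base (sum_dl d i).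
rewrite {1}/Dp mulr_suml linear_sum /=.
under eq_bigr => i _ do rewrite -scalerAl linearZ /= inner.
by rewrite sum_sc2 -mulr_suml; congr (_ *: _ + _ *: _).
Qed.

Lemma ADO : A (Dp d * Op O) = (D1 * R1) *: M211 + (2%:R * J3) *: (M31 - M211).
Proof.
have inner i : A ('X_i ^+ 2 * Op O) = R1 *: M211 + (2%:R * r i) *: (M31 - M211).
  rewrite /Op mulr_sumr linear_sum /=.
  under eq_bigr => j _ do rewrite mulr_sumr linear_sum /=.
  have pw : forall j k, A ('X_i ^+ 2 * (O j k *: ('X_j * 'X_k))) =
      O j k *: (M211 + (dl i j + dl i k) *: (M31 - M211)).
    move=> j k; rewrite -scalerAr linearZ /=; case: (eqVneq j k) => [<-|hjk].
      by rewrite hO0 !scale0r.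
    by rewrite VB.
  under eq_bigr => j _ do under eq_bigr => k _ do rewrite pw.
  rewrite sum2_sc_base1; congr (_ *: _ + _ *: _).
  under eq_bigr => j _ do under eq_bigr => k _ do rewrite mulrDr.
  rewrite sum2D (eq_bigr (fun j => \sum_(k < n) O j k * dl i j)) //.
  rewrite sum2_dl1 sum2_dl2 rowO_sym; rewrite /rowO; ring.
rewrite {1}/Dp mulr_suml linear_sum /=.
under eq_bigr => i _ do rewrite -scalerAl linearZ /= inner.
rewrite sum_sc2 -mulr_suml; congr (_ *: _ + _ *: _).
rewrite /J3 mulr_sumr; apply: eq_bigr => i _; ring.
Qed.

Lemma AO2 : A (Op O * Op O) = (R1 * R1) *: M1111 + (4%:R * J6) *: (M211 - M1111)
   + (2%:R * J5) *: (M22 - 2%:R *: M211 + M1111).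
Proof.
have inner i j : i != j -> A ('X_i * 'X_j * Op O) =
   R1 *: M1111 + (2%:R * (r i + r j)) *: (M211 - M1111)
   + (2%:R * O i j) *: (M22 - 2%:R *: M211 + M1111).
  move=> hij; rewrite /Op mulr_sumr linear_sum /=.
  under eq_bigr => k _ do rewrite mulr_sumr linear_sum /=.
  have pw : forall k l, A ('X_i * 'X_j * (O k l *: ('X_k * 'X_l))) =
      O k l *: (M1111 + (dl i k + dl i l + dl j k + dl j l) *: (M211 - M1111)
        + (dl i k * dl j l + dl i l * dl j k) *: (M22 - 2%:R *: M211 + M1111)).
    move=> k l; rewrite -scalerAr linearZ /=; case: (eqVneq k l) => [<-|hkl].
      by rewrite hO0 !scale0r.
    by rewrite VC.
  under eq_bigr => k _ do under eq_bigr => l _ do rewrite pw.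
  rewrite sum2_sc_base2; congr (_ *: _ + _ *: _ + _ *: _).
    under eq_bigr => k _ do under eq_bigr => l _ do rewrite !mulrDr.
    rewrite !sum2D (sum2_dl1 O i) (sum2_dl2 O i) (sum2_dl1 O j) (sum2_dl2 O j).
    by rewrite !rowO_sym /rowO; ring.
  under eq_bigr => k _ do under eq_bigr => l _ do rewrite mulrDr [dl i l * _]mulrC.
  by rewrite sum2D (sum2_dl12 O i j) (sum2_dl12 O j i) hOs; ring.
rewrite {1}/Op mulr_suml linear_sum /=.
under eq_bigr => i _ do rewrite mulr_suml linear_sum /=.
have pw : forall i j, A (O i j *: ('X_i * 'X_j) * Op O) =
   O i j *: (R1 *: M1111 + (2%:R * (r i + r j)) *: (M211 - M1111)
   + (2%:R * O i j) *: (M22 - 2%:R *: M211 + M1111)).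
  move=> i j; rewrite -scalerAl linearZ /=; case: (eqVneq i j) => [<-|hij].
    by rewrite hO0 !scale0r.
  by rewrite inner.
under eq_bigr => i _ do under eq_bigr => j _ do rewrite pw.
rewrite sum2_sc3; congr (_ *: _ + _ *: _ + _ *: _).
- rewrite /R1 mulr_suml; apply: eq_bigr => i _; rewrite /rowO mulr_suml.
  by apply: eq_bigr => j _; rewrite mulrC.
- have e1 : \sum_(k < n) \sum_(l < n) O k l * r k = J6.
    by rewrite /J6; apply: eq_bigr => k _; rewrite -mulr_suml expr2.
  have e2 : \sum_(k < n) \sum_(l < n) O k l * r l = J6.
    rewrite exchange_big /J6; apply: eq_bigr => l _.
    by rewrite -mulr_suml rowO_sym expr2.
  transitivity (\sum_(k < n) \sum_(l < n)
      (2%:R * (O k l * r k) + 2%:R * (O k l * r l))).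
    by apply: eq_bigr => k _; apply: eq_bigr => l _; ring.
  by rewrite sum2D !sum2Z e1 e2; ring.
- transitivity (\sum_(k < n) \sum_(l < n) (2%:R * (O k l ^+ 2))).
    by apply: eq_bigr => k _; apply: eq_bigr => l _; ring.
  by rewrite sum2Z.
Qed.

End QF.
Section Quad.
Variable (R : realType) (n : nat).
Local Notation N := (n%:R : R).

Lemma sum_quad (x y : 'I_n -> R) (a b c a' b' c' : R) :
  \sum_(i < n) (a * x i + b * y i + c) * (a' * x i + b' * y i + c') =
  a * a' * \sum_(i < n) x i ^+ 2 + (a * b' + b * a') * \sum_(i < n) x i * y i
  + b * b' * \sum_(i < n) y i ^+ 2 + (a * c' + a' * c) * \sum_(i < n) x i
  + (b * c' + b' * c) * \sum_(i < n) y i + N * (c * c').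
Proof.
have -> : N * (c * c') = \sum_(i < n) (c * c') by rewrite sumr_const card_ord mulr_natl.
rewrite !mulr_sumr -!big_split /=; apply: eq_bigr => i _; ring.
Qed.

Lemma sum_poly2 (F : 'I_n -> R) (a b c : R) :
  \sum_(i < n) (a * F i ^+ 2 + b * F i + c) =
  a * \sum_(i < n) F i ^+ 2 + b * \sum_(i < n) F i + N * c.
Proof.
have -> : N * c = \sum_(i < n) c by rewrite sumr_const card_ord mulr_natl.
by rewrite !mulr_sumr -!big_split.
Qed.

Lemma L2sum (c : R) (F : 'I_n -> R) :
  \sum_(i < n) \sum_(j < n) (c + F i + F j) ^+ 2 =
  N ^+ 2 * c ^+ 2 + 2%:R * N * \sum_(i < n) F i ^+ 2
  + 2%:R * (\sum_(i < n) F i) ^+ 2 + 4%:R * N * c * \sum_(i < n) F i.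
Proof.
set SF := \sum_(i < n) F i; set SF2 := \sum_(i < n) F i ^+ 2.
transitivity (\sum_(i < n) (N * F i ^+ 2 + (2%:R * SF + 2%:R * N * c) * F i
   + (SF2 + 2%:R * c * SF + N * c ^+ 2))).
  apply: eq_bigr => i _.
  transitivity (\sum_(j < n) (1 * F j ^+ 2 + (2%:R * (c + F i)) * F j + (c + F i) ^+ 2)).
    by apply: eq_bigr => j _; ring.
  by rewrite sum_poly2 -/SF -/SF2; ring.
by rewrite sum_poly2 -/SF -/SF2; ring.
Qed.

End Quad.

Section Params.
Variable (R : realType) (n : nat) (hn : (3 < n)%N).
Variable (d : 'I_n -> R) (O : 'I_n -> 'I_n -> R).
Hypothesis hOs : forall i j, O i j = O j i.
Hypothesis hO0 : forall i, O i i = 0.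
Local Notation N := (n%:R : R).
Local Notation r := (rowO O).
Local Notation D1 := (D1 d).
Local Notation J1 := (J1 d).
Local Notation R1 := (R1 O).
Local Notation J3 := (J3 d O).
Local Notation J6 := (J6 O).
Local Notation J5 := (J5 O).

Lemma L1sum (c : R) (F : 'I_n -> R) :
  \sum_(i < n) \sum_(j < n) O i j * (c + F i + F j) =
  c * R1 + 2%:R * \sum_(i < n) r i * F i.
Proof.
transitivity (\sum_(i < n) ((c + F i) * r i + \sum_(j < n) O i j * F j)).
  apply: eq_bigr => i _; rewrite /rowO mulr_sumr -big_split /=.
  by apply: eq_bigr => j _; ring.
rewrite big_split /=.
have e : \sum_(i < n) \sum_(j < n) O i j * F j = \sum_(j < n) r j * F j.
  rewrite exchange_big; apply: eq_bigr => j _.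
  by rewrite -mulr_suml rowO_sym // mulrC.
rewrite e /R1 mulr_sumr [2%:R * _]mulr_sumr -!big_split /=.
by apply: eq_bigr => i _; ring.
Qed.

Definition bbar := R1 / (N * (N - 1)).
Definition uu i := (r i - R1 / N) / (N - 2%:R).
Definition av i := d i - D1 / N - 2%:R * uu i.
Definition bv i := 2%:R * N * uu i.
Definition tt i j := O i j - bbar - uu i - uu j.
Definition J5pp := \sum_(i < n) \sum_(j < n) tt i j ^+ 2 - \sum_(i < n) tt i i ^+ 2.

Lemma N0' : N != 0. Proof. exact: (@N0 R n hn). Qed.
Lemma N1' : N - 1 != 0. Proof. exact: (@N1 R n hn). Qed.
Lemma N2' : N - 2%:R != 0. Proof. exact: (@N2 R n hn). Qed.
Lemma N3' : N - 3%:R != 0. Proof. exact: (@N3 R n hn). Qed.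

Ltac fld := rewrite /R1 /J1 /J3 /J6 /D1; field; rewrite ?N0' ?N1' ?N2' ?N3'.

Lemma Suu : \sum_(i < n) uu i = 0.
Proof.
transitivity (\sum_(i < n) ((N - 2%:R)^-1 * r i + (- (R1 / N / (N - 2%:R))))).
  by apply: eq_bigr => i _; rewrite /uu; field; rewrite ?N0' ?N2'.
rewrite big_split /= -mulr_sumr sumr_const card_ord -mulr_natl /R1; field.
by rewrite ?N0' ?N2'.
Qed.

Definition ku := (N - 2%:R)^-1.
Definition cu := - (R1 / N / (N - 2%:R)).

Lemma uuE i : uu i = 0 * d i + ku * r i + cu.
Proof. by rewrite /uu /ku /cu; field; rewrite ?N0' ?N2'. Qed.

Lemma Suu2 : \sum_(i < n) uu i ^+ 2 = (J6 - R1 ^+ 2 / N) / (N - 2%:R) ^+ 2.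
Proof.
rewrite (eq_bigr (fun i => (0 * d i + ku * r i + cu) * (0 * d i + ku * r i + cu))).
  by rewrite sum_quad /ku /cu; fld.
by move=> i _; rewrite uuE expr2.
Qed.

Lemma Sru : \sum_(i < n) r i * uu i = (J6 - R1 ^+ 2 / N) / (N - 2%:R).
Proof.
rewrite (eq_bigr (fun i => (0 * d i + 1 * r i + 0) * (0 * d i + ku * r i + cu))).
  by rewrite sum_quad /ku /cu; fld.
by move=> i _; rewrite uuE; ring.
Qed.

Lemma Sbb : \sum_(i < n) bv i ^+ 2 =
  4%:R * N ^+ 2 * (J6 - R1 ^+ 2 / N) / (N - 2%:R) ^+ 2.
Proof.
rewrite (eq_bigr (fun i => (0 * d i + 2%:R * N * ku * r i + 2%:R * N * cu) *
                          (0 * d i + 2%:R * N * ku * r i + 2%:R * N * cu))).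
  by rewrite sum_quad /ku /cu; fld.
by move=> i _; rewrite /bv uuE; ring.
Qed.

Lemma Sab : \sum_(i < n) av i * bv i =
  2%:R * N * ((J3 - D1 * R1 / N) / (N - 2%:R) - 2%:R * (J6 - R1 ^+ 2 / N) / (N - 2%:R) ^+ 2).
Proof.
rewrite (eq_bigr (fun i => (1 * d i + (- 2%:R * ku) * r i + (- (D1 / N) - 2%:R * cu)) *
                          (0 * d i + 2%:R * N * ku * r i + 2%:R * N * cu))).
  by rewrite sum_quad /ku /cu; fld.
by move=> i _; rewrite /bv /av uuE; ring.
Qed.

Lemma Saa : \sum_(i < n) av i ^+ 2 =
  (J1 - D1 ^+ 2 / N) - 4%:R * (J3 - D1 * R1 / N) / (N - 2%:R)
  + 4%:R * (J6 - R1 ^+ 2 / N) / (N - 2%:R) ^+ 2.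
Proof.
rewrite (eq_bigr (fun i => (1 * d i + (- 2%:R * ku) * r i + (- (D1 / N) - 2%:R * cu)) *
                          (1 * d i + (- 2%:R * ku) * r i + (- (D1 / N) - 2%:R * cu)))).
  by rewrite sum_quad /ku /cu; fld.
by move=> i _; rewrite /av uuE; ring.
Qed.

Lemma SJ5 : J5pp = J5 - R1 ^+ 2 / (N * (N - 1)) - 2%:R * (J6 - R1 ^+ 2 / N) / (N - 2%:R).
Proof.
have e1 : \sum_(i < n) \sum_(j < n) tt i j ^+ 2 =
   J5 + (- 2%:R) * (bbar * R1 + 2%:R * \sum_(i < n) r i * uu i)
   + (N ^+ 2 * bbar ^+ 2 + 2%:R * N * \sum_(i < n) uu i ^+ 2
      + 2%:R * (\sum_(i < n) uu i) ^+ 2 + 4%:R * N * bbar * \sum_(i < n) uu i).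
  rewrite -L1sum -L2sum /J5 -sum2Z -!sum2D; apply: eq_bigr => i _; apply: eq_bigr => j _.
  by rewrite /tt; ring.
have e2 : \sum_(i < n) tt i i ^+ 2 =
   4%:R * \sum_(i < n) uu i ^+ 2 + (4%:R * bbar) * \sum_(i < n) uu i + N * bbar ^+ 2.
  rewrite -sum_poly2; apply: eq_bigr => i _; rewrite /tt hO0; ring.
rewrite /J5pp e1 e2 Suu Suu2 Sru /bbar.
rewrite /R1 /J6; field; rewrite ?N0' ?N1' ?N2' ?N3' //.
Qed.

End Params.
Definition Tpoly (R : realType) (n : nat) (a11 a12 a22 b11 b12 b22 g : R) : {mpoly R[n]} :=
  let p := @psum R n in
  a11 *: (p 1%N ^+ 4) + (2 * a12) *: (p 2%N * p 1%N ^+ 2)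
        + a22 *: (p 2%N ^+ 2)
        + b11 *: (p 2%N * p 1%N ^+ 2 - p 1%N ^+ 4)
        + (2 * b12) *: (p 3%N * p 1%N - p 2%N * p 1%N ^+ 2)
        + b22 *: (p 4%N - p 2%N ^+ 2)
        + g *: ((2%:R)^-1 *: (p 1%N ^+ 4) - p 2%N * p 1%N ^+ 2
                + (((n ^ 2)%:R - (3 * n)%:R + 3%:R) / (2 * (n ^ 2)%:R))
                    *: (p 2%N ^+ 2)
                + (((2 * n)%:R - 2%:R) / (n ^ 2)%:R) *: (p 3%N * p 1%N)
                + ((1 - n%:R) / (2 * (n ^ 2)%:R)) *: p 4%N).

Section Main1.
Variable (R : realType) (n : nat) (hn : (3 < n)%N).
Local Notation MP := {mpoly R[n]}.
Local Notation p := (@psum R n).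
Local Notation N := (n%:R : R).
Local Notation lc := (@lc R n).
Local Notation Tpoly := (@Tpoly R n).

Lemma TE (a11 a12 a22 b11 b12 b22 g : R) :
  Tpoly a11 a12 a22 b11 b12 b22 g =
  lc (a11 - b11 + g * (2%:R)^-1)
     (2 * a12 + b11 - 2 * b12 - g)
     (a22 - b22 + g * (((n ^ 2)%:R - (3 * n)%:R + 3%:R) / (2 * (n ^ 2)%:R)))
     (2 * b12 + g * (((2 * n)%:R - 2%:R) / (n ^ 2)%:R))
     (b22 + g * ((1 - n%:R) / (2 * (n ^ 2)%:R))).
Proof.
rewrite /Tpoly /lc -!mul_mpolyC ?rmorphD ?rmorphB ?rmorphN ?rmorphM ?rmorph1 ?rmorph0 /=.
ring.
Qed.

End Main1.
Section Main2.
Variable (R : realType) (n : nat) (hn : (3 < n)%N).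
Variable (d : 'I_n -> R) (O : 'I_n -> 'I_n -> R).
Hypothesis hOs : forall i j, O i j = O j i.
Hypothesis hO0 : forall i, O i i = 0.
Local Notation MP := {mpoly R[n]}.
Local Notation p := (@psum R n).
Local Notation N := (n%:R : R).
Local Notation lc := (@lc R n).
Local Notation Tpoly := (@Tpoly R n).

Definition pu := N * R1 O / (N - 1).
Definition pv := D1 d - R1 O / (N - 1).
Definition pb11 := N / (N - 1) * \sum_(i < n) bv O i ^+ 2.
Definition pb12 := N / (N - 1) * \sum_(i < n) av d O i * bv O i.
Definition pb22 := N / (N - 1) * \sum_(i < n) av d O i ^+ 2.
Definition pg := 4%:R * N ^+ 3 / ((N - 1) * (N - 2%:R) * (N - 3%:R)) * J5pp O.

Lemma Aq2 : Aop ((Dp d + Op O) ^+ 2) =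
  Tpoly (pu ^+ 2) (pu * pv) (pv ^+ 2) pb11 pb12 pb22 pg.
Proof.
rewrite sqrrD expr2 expr2 !linearD /=.
rewrite (@AD2 R n hn d) (@ADO R n hn d O hOs hO0) (@AO2 R n hn O hOs hO0).
rewrite (M22E R hn) (M31E R hn) (M211E R hn) (M1111E R hn) (p4E R n).
rewrite !(lc_sub, lc_scale, lc_add).
rewrite TE /pb11 /pb12 /pb22 /pg (Sbb hn d) (Sab hn) (Saa hn) (SJ5 hn d hOs hO0).
rewrite /pu /pv /D3 /D2 !natrX !natrM.
apply: lc_eq; field; rewrite ?(N0' R hn) ?(N1' R hn) ?(N2' R hn) ?(N3' R hn) //.
Qed.

End Main2.
Section NonNeg.
Variable (R : realType) (n : nat) (hn : (3 < n)%N).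
Variable (d : 'I_n -> R) (O : 'I_n -> 'I_n -> R).
Local Notation N := (n%:R : R).

Lemma Nk_gt0 k : (k <= 3)%N -> 0 < N - k%:R.
Proof. by move=> hk; rewrite subr_gt0 ltr_nat (leq_ltn_trans hk hn). Qed.

Lemma form_a (x y : R) : 0 <= (pu O) ^+ 2 * x ^+ 2 + 2 * (pu O * pv d O) * x * y + (pv d O) ^+ 2 * y ^+ 2.
Proof.
rewrite (_ : _ + _ = (pu O * x + pv d O * y) ^+ 2); last by ring.
exact: sqr_ge0.
Qed.

Lemma form_b (x y : R) : 0 <= pb11 O * x ^+ 2 + 2 * pb12 d O * x * y + pb22 d O * y ^+ 2.
Proof.
rewrite (_ : _ + _ = N / (N - 1) * \sum_(i < n) (bv O i * x + av d O i * y) ^+ 2).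
  apply: mulr_ge0; last by apply: sumr_ge0 => i _; exact: sqr_ge0.
  apply: divr_ge0; first by rewrite ler0n.
  by apply: ltW; move: (Nk_gt0 (isT : (1 <= 3)%N)).
rewrite /pb11 /pb12 /pb22.
transitivity (N / (N - 1) * (x ^+ 2 * \sum_(i < n) bv O i ^+ 2
   + 2 * x * y * \sum_(i < n) av d O i * bv O i + y ^+ 2 * \sum_(i < n) av d O i ^+ 2)).
  by ring.
congr (_ * _); rewrite !mulr_sumr -!big_split /=; apply: eq_bigr => i _; ring.
Qed.

Lemma J5pp_ge0 : 0 <= J5pp O.
Proof.
rewrite /J5pp -sumrB; apply: sumr_ge0 => i _.
rewrite (bigD1 i) //= addrC addrK; apply: sumr_ge0 => j _; exact: sqr_ge0.
Qed.

Lemma pg_ge0 : 0 <= pg O.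
Proof.
rewrite /pg; apply: mulr_ge0; last exact: J5pp_ge0.
apply: divr_ge0; first by rewrite mulr_ge0 ?exprn_ge0 ?ler0n.
rewrite !mulr_ge0 // ltW //.
- by move: (Nk_gt0 (isT : (1 <= 3)%N)).
- exact: (Nk_gt0 (isT : (2 <= 3)%N)).
- exact: (Nk_gt0 (isT : (3 <= 3)%N)).
Qed.

End NonNeg.
Section Rep.
Variable (R : realType) (n : nat).
Local Notation MP := {mpoly R[n]}.
Local Notation dl := (@dl R n).
Local Notation dl_ne := (@dl_ne R n _ _).
Local Notation dl_id := (@dl_id R n _).

Lemma deg2_split (m : 'X_{1..n}) : mdeg m = 2%N -> exists a b, m = (U_(a) + U_(b))%MM.
Proof.
move=> hm; case: (pickP (fun a => m a != 0%N)) => [a ha | hnone]; last first.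
  move: hm; rewrite mdegE big1 // => i _; by move: (hnone i) => /negbFE /eqP.
have le : (U_(a) <= m)%MM by rewrite lep1mP.
have e : m = (m - U_(a) + U_(a))%MM by rewrite submK.
have : mdeg (m - U_(a))%MM == 1%N.
  by move: hm; rewrite {1}e mdegD mdeg1 addn1 => -[->].
case/mdeg1P => b /eqP hb; exists b, a; by rewrite {1}e hb.
Qed.

Lemma sumZ_dl (F : 'I_n -> MP) (k : 'I_n -> R) a :
  \sum_(i < n) (k i * dl i a) *: F i = k a *: F a.
Proof.
rewrite (bigD1 a) //= dl_id mulr1 big1 ?addr0 // => i hi.
by rewrite dl_ne ?mulr0 ?scale0r.
Qed.

Lemma Dp0 : Dp (fun _ : 'I_n => 0 : R) = 0.
Proof. by rewrite /Dp big1 // => i _; rewrite scale0r. Qed.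
Lemma Op0 : Op (fun _ _ : 'I_n => 0 : R) = 0.
Proof. by rewrite /Op big1 // => i _; rewrite big1 // => j _; rewrite scale0r. Qed.

Lemma Dp_add (d d' : 'I_n -> R) : Dp d + Dp d' = Dp (fun i => d i + d' i).
Proof. by rewrite /Dp -big_split; apply: eq_bigr => i _; rewrite scalerDl. Qed.
Lemma Op_add (O O' : 'I_n -> 'I_n -> R) : Op O + Op O' = Op (fun i j => O i j + O' i j).
Proof.
rewrite /Op -big_split; apply: eq_bigr => i _.
by rewrite -big_split; apply: eq_bigr => j _; rewrite scalerDl.
Qed.

Lemma mono_rep (c : R) (a b : 'I_n) : exists d O,
  [/\ forall i j, O i j = O j i, forall i, O i i = 0 &
      c *: ('X_a * 'X_b : MP) = Dp d + Op O].
Proof.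
case: (eqVneq a b) => [<-|hab].
  exists (fun i => c * dl i a), (fun _ _ => 0); split => //.
  by rewrite Op0 addr0 /Dp sumZ_dl expr2.
exists (fun _ => 0), (fun i j => c / 2%:R * (dl i a * dl j b + dl i b * dl j a)).
split.
- by move=> i j; ring.
- move=> i; case: (eqVneq i a) => [->|hia].
    by rewrite (dl_ne hab) dl_id; ring.
  by rewrite (dl_ne hia); ring.
rewrite Dp0 add0r /Op.
transitivity ((\sum_(i < n) \sum_(j < n)
   ((c / 2%:R * dl i a) * dl j b) *: ('X_i * 'X_j : MP)) +
   \sum_(i < n) \sum_(j < n)
    ((c / 2%:R * dl i b) * dl j a) *: ('X_i * 'X_j : MP)); last first.
  rewrite -big_split; apply: eq_bigr => i _; rewrite -big_split; apply: eq_bigr => j _ /=.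
  by rewrite -scalerDl; congr (_ *: _); ring.
rewrite (eq_bigr (fun i => (c / 2%:R * dl i a) *: ('X_i * 'X_b))); last first.
  by move=> i _; rewrite (sumZ_dl (fun j => 'X_i * 'X_j) (fun _ => c / 2%:R * dl i a)).
rewrite [X in _ = _ + X](eq_bigr (fun i => (c / 2%:R * dl i b) *: ('X_i * 'X_a))); last first.
  by move=> i _; rewrite (sumZ_dl (fun j => 'X_i * 'X_j) (fun _ => c / 2%:R * dl i b)).
rewrite (sumZ_dl (fun i => 'X_i * 'X_b) (fun _ => c / 2%:R)).
rewrite (sumZ_dl (fun i => 'X_i * 'X_a) (fun _ => c / 2%:R)).
rewrite (mulrC 'X_b 'X_a) -scalerDl; congr (_ *: _); field; by rewrite ?pnatr_eq0.
Qed.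

Lemma rep2 (h : MP) : h \is 2.-homog -> exists d O,
  [/\ forall i j, O i j = O j i, forall i, O i i = 0 & h = Dp d + Op O].
Proof.
move=> /dhomogP hh; rewrite [h]mpolyE.
have : {in msupp h, forall m, mdeg m = 2%N} by [].
elim: (msupp h) => [|m s IH] hs.
  exists (fun _ => 0), (fun _ _ => 0); split => //.
  by rewrite big_nil Dp0 Op0 addr0.
have [d [O [hO1 hO2 eIH]]] := IH (fun x xs => hs x (mem_behead (s := m :: s) xs)).
have [a [b hm]] := deg2_split (hs m (mem_head _ _)).
have [d' [O' [hO1' hO2' e]]] := mono_rep (h@_m) a b.
exists (fun i => d' i + d i), (fun i j => O' i j + O i j); split.
- by move=> i j; rewrite hO1 hO1'.
- by move=> i; rewrite hO2 hO2' addr0.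
rewrite big_cons eIH [X in _ *: 'X_[X]]hm mpolyXD e -Dp_add -Op_add.
by rewrite addrACA.
Qed.

End Rep.
Section Homog.
Variable (R : realType) (n : nat).
Local Notation MP := {mpoly R[n]}.

Lemma exists_max (s : seq MP) : s != [::] ->
  exists2 x, x \in s & forall y, y \in s -> (mlead y <= mlead x)%O.
Proof.
elim: s => [|x s IH] // _; case: (eqVneq s [::]) => [->|ne].
  by exists x; rewrite ?mem_head // => y; rewrite inE => /eqP ->.
have [z zs hz] := IH ne; case: (leP (mlead z) (mlead x)) => hzx.
  exists x; first exact: mem_head.
  move=> y; rewrite inE => /orP[/eqP -> //|ys]; exact: le_trans (hz y ys) hzx.
exists z; first by rewrite inE zs orbT.
by move=> y; rewrite inE => /orP[/eqP ->|ys]; [exact: ltW | exact: hz].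
Qed.

Lemma sum_ge_mem (F : MP -> R) (s : seq MP) x : x \in s ->
  (forall y, y \in s -> 0 <= F y) -> F x <= \sum_(y <- s) F y.
Proof.
move=> xs hF; rewrite (perm_big _ (perm_to_rem xs)) big_cons /= lerDl.
rewrite big_seq; apply: sumr_ge0 => y /mem_rem; exact: hF.
Qed.

Lemma coef_sq (q : MP) M : (mlead q <= M)%O -> (q ^+ 2)@_(M *+ 2)%MM = (q@_M) ^+ 2.
Proof.
rewrite le_eqVlt => /orP[/eqP <-|lt]; first by rewrite mleadcX.
rewrite (mcoeff_gt_mlead lt) expr0n /=; apply: mcoeff_gt_mlead.
apply: (le_lt_trans (mleadX_le _ _)).
by rewrite !mulmS !mulm0n !addm0; apply: ltm_add.
Qed.

Lemma sos_key (s : seq MP) q0 : q0 \in s -> q0 != 0 -> exists M,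
  0 < (\sum_(q <- s) q ^+ 2)@_(M *+ 2)%MM /\ forall q, q \in s -> (mlead q <= M)%O.
Proof.
move=> q0s nz0; set l := [seq q <- s | q != 0].
have q0l : q0 \in l by rewrite mem_filter nz0.
have lne : l != [::] by apply/eqP => e; rewrite e in q0l.
have [x xl hx] := exists_max lne.
move: (xl); rewrite mem_filter => /andP[xnz xs].
have hb : forall q, q \in s -> (mlead q <= mlead x)%O.
  move=> q qs; case: (eqVneq q 0) => [->|qnz]; first by rewrite mlead0 le0m.
  by apply: hx; rewrite mem_filter qnz.
exists (mlead x); split => //.
rewrite raddf_sum /= (eq_big_seq (fun q => (q@_(mlead x)) ^+ 2)); last first.
  by move=> q qs; rewrite coef_sq // hb.
apply: (@lt_le_trans _ _ ((x@_(mlead x)) ^+ 2)).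
  by rewrite lt0r sqr_ge0 andbT sqrf_eq0 mleadc_eq0.
apply: (@sum_ge_mem (fun q => (q@_(mlead x)) ^+ 2) s x xs) => y _; exact: sqr_ge0.
Qed.

Lemma SOS0 (s : seq MP) : \sum_(q <- s) q ^+ 2 = 0 -> forall q, q \in s -> q = 0.
Proof.
move=> h0 q qs; apply/eqP; apply/negPn/negP => nz.
have [M [hM _]] := sos_key qs nz.
by move: hM; rewrite h0 mcoeff0 ltxx.
Qed.

Lemma deg_bound (f : MP) (s : seq MP) : f \is 4.-homog -> f = \sum_(q <- s) q ^+ 2 ->
  forall q, q \in s -> forall m, m \in msupp q -> (mdeg m <= 2)%N.
Proof.
move=> hf ef q qs m mq.
have qnz : q != 0 by apply/eqP => e; move: mq; rewrite e msupp0.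
have [M [hM hb]] := sos_key qs qnz.
have hMs : (M *+ 2)%MM \in msupp f by rewrite mcoeff_msupp ef gt_eqF.
have h4 : mdeg (M *+ 2)%MM = 4%N := dhomog_mf hf hMs.
rewrite mdegMn in h4.
have hdM : mdeg M = 2%N by move: h4; case: (mdeg M) => [|[|[|k]]].
rewrite -hdM; apply: lemc_mdeg; apply: le_trans (hb q qs).
exact: msupp_le_mlead.
Qed.

Lemma PH (p : MP) e d : p \is e.-homog ->
  pihomog mdeg d p = if d == e then p else 0.
Proof.
move=> hp; case: (eqVneq d e) => [->|ne]; first exact: pihomog_dE.
by apply: (pihomog_ne0 _ hp); rewrite eq_sym.
Qed.

Lemma comp_split (q : MP) : (forall m, m \in msupp q -> (mdeg m <= 2)%N) ->
  q = pihomog mdeg 0 q + pihomog mdeg 1 q + pihomog mdeg 2 q.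
Proof.
move=> hq.
have hs : (mmeasure mdeg q <= 3)%N.
  rewrite (_ : mmeasure mdeg q = msize q) // msizeE.
  by apply/bigmax_leqP_seq => m mq _; rewrite ltnS hq.
rewrite {1}(pihomog_partitionE hs).
by rewrite !big_ord_recr big_ord0 /= add0r.
Qed.

Lemma ph_sq (c l h : MP) d : c \is 0.-homog -> l \is 1.-homog -> h \is 2.-homog ->
  pihomog mdeg d ((c + l + h) ^+ 2) =
   (if d == 0%N then c * c else 0) + (if d == 1%N then c * l else 0) *+ 2
   + ((if d == 2%N then l * l else 0) + (if d == 2%N then c * h else 0) *+ 2)
   + (if d == 3%N then l * h else 0) *+ 2 + (if d == 4%N then h * h else 0).
Proof.
move=> hc hl hh.
rewrite (_ : (c + l + h) ^+ 2 = c * c + (c * l) *+ 2 + (l * l + (c * h) *+ 2)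
   + (l * h) *+ 2 + h * h); last by ring.
rewrite !linearD /= ?raddfMn /=.
rewrite (PH d (dhomogM hc hc)) (PH d (dhomogM hc hl)) (PH d (dhomogM hl hl)).
rewrite (PH d (dhomogM hc hh)) (PH d (dhomogM hl hh)) (PH d (dhomogM hh hh)) /=.
by rewrite ?mulr2n.
Qed.

Lemma reduce (f : MP) (s : seq MP) : f \is 4.-homog -> f = \sum_(q <- s) q ^+ 2 ->
  f = \sum_(q <- s) (pihomog mdeg 2 q) ^+ 2.
Proof.
move=> hf ef.
have hsplit : forall q, q \in s -> q = pihomog mdeg 0 q + pihomog mdeg 1 q + pihomog mdeg 2 q.
  by move=> q qs; apply: comp_split; apply: deg_bound hf ef q qs.
have hom k q : pihomog mdeg k q \is k.-homog by exact: pihomogP.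
have e0 : \sum_(q <- s) (pihomog mdeg 0 q) ^+ 2 = 0.
  have := PH 0 hf; rewrite /= => h0.
  rewrite -[RHS]h0 ef raddf_sum /=; apply: eq_big_seq => q qs.
  by rewrite {2}(hsplit q qs) ph_sq ?hom //= ?mul0rn !addr0 expr2.
have c0 : forall q, q \in s -> pihomog mdeg 0 q = 0.
  move=> q qs; apply: (SOS0 (s := map (pihomog mdeg 0) s)); last exact: map_f.
  by rewrite big_map.
have e1 : \sum_(q <- s) (pihomog mdeg 1 q) ^+ 2 = 0.
  have := PH 2 hf; rewrite /= => h0.
  rewrite -[RHS]h0 ef raddf_sum /=; apply: eq_big_seq => q qs.
  by rewrite {2}(hsplit q qs) ph_sq ?hom //= c0 // mul0r ?mul0rn !add0r !addr0 expr2.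
have l0 : forall q, q \in s -> pihomog mdeg 1 q = 0.
  move=> q qs; apply: (SOS0 (s := map (pihomog mdeg 1) s)); last exact: map_f.
  by rewrite big_map.
rewrite ef; apply: eq_big_seq => q qs.
by rewrite {1}(hsplit q qs) c0 // l0 // !add0r.
Qed.

End Homog.
Section Final.
Variable (R : realType) (n : nat).
Local Notation MP := {mpoly R[n]}.
Local Notation Tpoly := (@Tpoly R n).

Lemma psd_sym2 (a b c : R) :
  (forall x y, 0 <= a * x ^+ 2 + 2 * b * x * y + c * y ^+ 2) -> psd (sym2 a b c).
Proof.
move=> h; split.
  by apply/matrixP => i j; rewrite !mxE; case: i => [[|[|?]] ?]; case: j => [[|[|?]] ?].
move=> v; rewrite !(big_ord_recl, big_ord0, mxE) /=.
set x := v ord0 ord0; set y := v (lift ord0 ord0) ord0.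
have := h x y; congr (_ <= _); ring.
Qed.

Lemma Tpoly_add (a11 a12 a22 b11 b12 b22 g a11' a12' a22' b11' b12' b22' g' : R) :
  Tpoly a11 a12 a22 b11 b12 b22 g + Tpoly a11' a12' a22' b11' b12' b22' g' =
  Tpoly (a11 + a11') (a12 + a12') (a22 + a22') (b11 + b11') (b12 + b12') (b22 + b22') (g + g').
Proof. by rewrite !TE lc_add; apply: lc_eq; ring. Qed.

Lemma Tpoly0 : Tpoly 0 0 0 0 0 0 0 = 0.
Proof. by rewrite /Tpoly !(mulr0, scale0r, addr0). Qed.

Lemma IND (hn : (3 < n)%N) (hs : seq MP) : (forall h, h \in hs -> h \is 2.-homog) ->
  exists a11 a12 a22 b11 b12 b22 g : R,
  [/\ 0 <= g, forall x y, 0 <= a11 * x ^+ 2 + 2 * a12 * x * y + a22 * y ^+ 2,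
      forall x y, 0 <= b11 * x ^+ 2 + 2 * b12 * x * y + b22 * y ^+ 2 &
      Aop (\sum_(h <- hs) h ^+ 2) = Tpoly a11 a12 a22 b11 b12 b22 g].
Proof.
elim: hs => [|h hs IH] hh.
  exists 0, 0, 0, 0, 0, 0, 0; split => //.
  - by move=> x y; rewrite !(mul0r, mulr0, addr0).
  - by move=> x y; rewrite !(mul0r, mulr0, addr0).
  by rewrite big_nil linear0 Tpoly0.
have [a11 [a12 [a22 [b11 [b12 [b22 [g [hg ha hb he]]]]]]]] :=
  IH (fun x xs => hh x (mem_behead (s := h :: hs) xs)).
have [d [O [hOs hO0 eh]]] := rep2 (hh h (mem_head _ _)).
exists (pu O ^+ 2 + a11), (pu O * pv d O + a12), (pv d O ^+ 2 + a22),
  (pb11 O + b11), (pb12 d O + b12), (pb22 d O + b22), (pg O + g); split.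
- by rewrite addr_ge0 // (pg_ge0 hn).
- move=> x y; have := form_a d O x y; have := ha x y.
  move=> h1 h2; rewrite (_ : _ + _ = (pu O ^+ 2 * x ^+ 2 + 2 * (pu O * pv d O) * x * y
     + pv d O ^+ 2 * y ^+ 2) + (a11 * x ^+ 2 + 2 * a12 * x * y + a22 * y ^+ 2)).
    exact: addr_ge0.
  by ring.
- move=> x y; have := form_b hn d O x y; have := hb x y.
  move=> h1 h2; rewrite (_ : _ + _ = (pb11 O * x ^+ 2 + 2 * pb12 d O * x * y
     + pb22 d O * y ^+ 2) + (b11 * x ^+ 2 + 2 * b12 * x * y + b22 * y ^+ 2)).
    exact: addr_ge0.
  by ring.
rewrite big_cons linearD /= he eh (Aq2 hn d hOs hO0) Tpoly_add //.
Qed.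

End Final.
Theorem theorem6p1 (R : realType) (n : nat) (hn : (4 <= n)%N)
    (f : {mpoly R[n]}) (hsym : f \is symmetric) (hhom : f \is 4.-homog)
    (hsos : is_sos f) :
  let p := @psum R n in
  exists (a11 a12 a22 b11 b12 b22 g : R),
    [/\ 0 <= g, psd (sym2 a11 a12 a22), psd (sym2 b11 b12 b22) &
    f = a11 *: (p 1%N ^+ 4) + (2 * a12) *: (p 2%N * p 1%N ^+ 2)
        + a22 *: (p 2%N ^+ 2)
        + b11 *: (p 2%N * p 1%N ^+ 2 - p 1%N ^+ 4)
        + (2 * b12) *: (p 3%N * p 1%N - p 2%N * p 1%N ^+ 2)
        + b22 *: (p 4%N - p 2%N ^+ 2)
        + g *: ((2%:R)^-1 *: (p 1%N ^+ 4) - p 2%N * p 1%N ^+ 2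
                + (((n ^ 2)%:R - (3 * n)%:R + 3%:R) / (2 * (n ^ 2)%:R))
                    *: (p 2%N ^+ 2)
                + (((2 * n)%:R - 2%:R) / (n ^ 2)%:R) *: (p 3%N * p 1%N)
                + ((1 - n%:R) / (2 * (n ^ 2)%:R)) *: p 4%N)].
Proof.
move=> p; case: hsos => s ef.
have hn3 : (3 < n)%N := hn.
have er := reduce hhom ef.
have all2 : forall h, h \in map (pihomog mdeg 2) s -> h \is 2.-homog.
  by move=> h /mapP [q _ ->]; exact: pihomogP.
have [a11 [a12 [a22 [b11 [b12 [b22 [g [hg ha hb he]]]]]]]] := IND hn3 all2.
exists a11, a12, a22, b11, b12, b22, g; split => //.
- by apply: psd_sym2.
- by apply: psd_sym2.
rewrite -(Aop_sym hsym) {1}er -(big_map (pihomog mdeg 2) xpredT (fun h => h ^+ 2)) he.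
by [].
Qed.
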